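(* Let $\rho\in\mathbb R$, let $\mathbf a=(a_{m,n})$ be a complex matrix and let $\kappa_{\mathbf a}:\mathbb H_\rho\times\mathbb H_\rho\to\mathbb C$ be the Dirichlet series kernel with coefficient matrix $\mathbf a$. If $\kappa_{\mathbf a}$ is non-constant, then $\kappa_{\mathbf a}$ is not $\mathrm{Aut}_L(\mathbb H_\rho)$-invariant.
   Context: $\mathbb H_\rho=\{\Re s>\rho\}$. $\kappa_{\mathbf a}(s,u)=\sum_{m,n\ge1}a_{m,n}m^{-s}n^{-\bar u}$ is a Dirichlet series kernel on $\mathbb H_\rho$ if $(s,u)\mapsto\kappa_{\mathbf a}(s,\bar u)$ is regularly convergent on $\mathbb H_\rho\times\mathbb H_\rho$ (regular convergence of $\sum c_{m,n}m^{-s}n^{-u}$ at $(s_0,u_0)$: the double series converges there and all row series $\sum_m c_{m,n}m^{-s_0}$ and column series $\sum_n c_{m,n}n^{-u_0}$ converge). For $A=\begin{pmatrix}a&b\\0&d\end{pmatrix}\in\mathrm{SL}_2(\mathbb R)$ let $\phi_A(s)=\frac{a(s-\rho)-ib}{d}+\rho$; $\mathrm{Aut}_L(\mathbb H_\rho)$ is the group of all such $\phi_A$. For a group $G$ acting on a domain $\Omega$, a positive semi-definite kernel $\kappa$ on $\Omega$ is called $G$-invariant if $\kappa(g\cdot s,g\cdot u)=\kappa(s,u)$ for all $s,u\in\Omega$, $g\in G$. *)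

(* Defs.v *)
From Stdlib Require Import Reals ClassicalEpsilon.
From Coquelicot Require Import Coquelicot.
Open Scope R_scope.

Definition inH (rho : R) (s : C) : Prop := Re s > rho.

(* n^{-s} = exp(-s ln n) for a positive integer n *)
Definition npow_neg (n : nat) (s : C) : C :=
  Cmult (RtoC (exp (- (Re s) * ln (INR n))))
        (cos (Im s * ln (INR n)), - sin (Im s * ln (INR n))).

(* Double series sum_{m,n>=1} c m n, indices m,n >= 1 (c 0 _ and c _ 0 unused).
   Square/rectangular partial sums S(M,N) = sum_{m=1}^{M} sum_{n=1}^{N} c m n. *)
Definition dpartial (c : nat -> nat -> C) (MN : nat * nat) : C :=
  sum_n (fun i => sum_n (fun j => c (S i) (S j)) (snd MN)) (fst MN).

Definition dsum_to (c : nat -> nat -> C) (l : C) : Prop :=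
  filterlim (dpartial c) (filter_prod eventually eventually) (locally l).

Definition regularly_convergent (c : nat -> nat -> C) : Prop :=
  (exists l, dsum_to c l) /\
  (forall n : nat, (1 <= n)%nat -> ex_series (fun i => c (S i) n)) /\
  (forall m : nat, (1 <= m)%nat -> ex_series (fun j => c m (S j))).

Definition dterm (a : nat -> nat -> C) (s w : C) (m n : nat) : C :=
  Cmult (Cmult (a m n) (npow_neg m s)) (npow_neg n w).

Definition dvalue (c : nat -> nat -> C) : C :=
  epsilon (inhabits (RtoC 0)) (fun l => dsum_to c l).

Definition kappa (a : nat -> nat -> C) (s u : C) : C :=
  dvalue (dterm a s (Cconj u)).

(* kappa_a is a Dirichlet series kernel on H_rho: (s,u) |-> kappa_a(s, conj u)
   is regularly convergent on H_rho x H_rho. *)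
Definition is_dirichlet_kernel (rho : R) (a : nat -> nat -> C) : Prop :=
  forall s u : C, inH rho s -> inH rho u ->
    regularly_convergent (dterm a s (Cconj (Cconj u))).

(* phi_A(s) = (a (s - rho) - i b)/d + rho for A = [[a,b],[0,d]] in SL_2(R) *)
Definition phiA (rho a b d : R) (s : C) : C :=
  Cplus (Cdiv (Cminus (Cmult (RtoC a) (Cminus s (RtoC rho))) (Cmult Ci (RtoC b)))
              (RtoC d))
        (RtoC rho).

Definition autL_invariant (rho : R) (k : C -> C -> C) : Prop :=
  forall a b d : R, a * d = 1 ->
    forall s u : C, inH rho s -> inH rho u -> k (phiA rho a b d s) (phiA rho a b d u) = k s u.

Definition nonconstant_on (rho : R) (k : C -> C -> C) : Prop :=
  exists s u s' u', inH rho s /\ inH rho u /\ inH rho s' /\ inH rho u' /\ k s u <> k s' u'.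

(* Main.v *)
Require Import Defs.
From Stdlib Require Import Reals.
From Stdlib Require Import Lra Lia ClassicalEpsilon Arith.
From Coquelicot Require Import Coquelicot.
Open Scope R_scope.

Lemma finite_max (P : nat -> R -> Prop) :
  (forall k B B', B <= B' -> P k B -> P k B') ->
  forall K, (forall k, (k <= K)%nat -> exists B, P k B) ->
  exists B, forall k, (k <= K)%nat -> P k B.
Proof.
  intros Hm K. induction K as [|K IH]; intros H.
  - destruct (H 0%nat (le_n 0)) as [B HB]. exists B. intros k Hk.
    assert (k = 0%nat) by lia. subst. exact HB.
  - destruct IH as [B1 HB1]. { intros k Hk. apply H. lia. }
    destruct (H (S K) (le_n _)) as [B2 HB2].
    exists (Rmax B1 B2). intros k Hk.
    destruct (Nat.eq_dec k (S K)) as [->|Hne].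
    + apply Hm with B2; [apply Rmax_r|exact HB2].
    + apply Hm with B1; [apply Rmax_l|apply HB1; lia].
Qed.

Lemma conv_bounded (f : nat -> C) (l : C) :
  filterlim f eventually (locally l) -> exists B, forall n, Cmod (f n) <= B.
Proof.
  intros H. rewrite filterlim_locally in H.
  destruct (H (mkposreal 1 Rlt_0_1)) as [N HN].
  destruct (finite_max (fun k B => Cmod (f k) <= B)) with (K := N) as [B1 HB1].
  { intros k B B' Hle Hk. lra. }
  { intros k _. exists (Cmod (f k)). lra. }
  exists (Rmax B1 (Cmod l + @norm_factor _ C_NormedModule * 1)). intros n.
  destruct (le_lt_dec n N) as [Hn|Hn].
  - eapply Rle_trans; [apply HB1; exact Hn|apply Rmax_l].
  - eapply Rle_trans; [|apply Rmax_r].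
    assert (Hb := norm_compat2 _ _ _ (HN n ltac:(lia))).
    change (norm (minus (f n) l)) with (Cmod (f n - l)%C) in Hb.
    assert (E : f n = ((f n - l) + l)%C) by ring.
    rewrite E. eapply Rle_trans; [apply Cmod_triangle|]. simpl in Hb. lra.
Qed.

Lemma series_bounded (a : nat -> C) :
  ex_series a -> exists B, forall n, Cmod (a n) <= B.
Proof.
  intros [l Hl]. destruct (conv_bounded _ _ Hl) as [B HB].
  exists (2 * B). intros n. destruct n as [|n].
  - assert (H0 := HB 0%nat). rewrite sum_O in H0.
    assert (0 <= Cmod (a 0%nat)) by apply Cmod_ge_0. lra.
  - assert (E : a (S n) = (sum_n a (S n) - sum_n a n)%C).
    { rewrite sum_Sn. change plus with Cplus. ring. }
    rewrite E. eapply Rle_trans.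
    { unfold Cminus. apply Cmod_triangle. }
    rewrite Cmod_opp. assert (H1 := HB n). specialize (HB (S n)).
    apply Rle_trans with (B + B); [apply Rplus_le_compat; [exact HB|exact H1]|lra].
Qed.

Lemma Cmod4 (a b c d : C) : Cmod (a - b - c + d) <= Cmod a + Cmod b + Cmod c + Cmod d.
Proof.
  eapply Rle_trans; [apply Cmod_triangle|].
  unfold Cminus. eapply Rle_trans; [apply Rplus_le_compat_r, Cmod_triangle|].
  eapply Rle_trans; [apply Rplus_le_compat_r, Rplus_le_compat_r, Cmod_triangle|].
  rewrite !Cmod_opp. lra.
Qed.

Lemma dbounded (c : nat -> nat -> C) : regularly_convergent c ->
  exists B, forall m n, (1 <= m)%nat -> (1 <= n)%nat -> Cmod (c m n) <= B.
Proof.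
  intros [[l Hl] [Hcol Hrow]].
  unfold dsum_to in Hl. rewrite filterlim_locally in Hl.
  destruct (Hl (mkposreal 1 Rlt_0_1)) as [Q R' [M0 HQ] [N0 HR] HP].
  set (K := Cmod l + @norm_factor _ C_NormedModule * 1).
  assert (HK : forall M N, (M0 <= M)%nat -> (N0 <= N)%nat -> Cmod (dpartial c (M, N)) <= K).
  { intros M N HM HN. assert (Hb := norm_compat2 _ _ _ (HP M N (HQ M HM) (HR N HN))).
    change (norm (minus (dpartial c (M, N)) l)) with (Cmod (dpartial c (M, N) - l)%C) in Hb.
    assert (E : dpartial c (M, N) = ((dpartial c (M, N) - l) + l)%C) by ring.
    rewrite E. eapply Rle_trans; [apply Cmod_triangle|]. unfold K. simpl in Hb |- *. lra. }
  destruct (finite_max (fun m B => (1 <= m)%nat -> forall n, (1 <= n)%nat -> Cmod (c m n) <= B))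
    with (K := (M0 + 2)%nat) as [B1 HB1].
  { intros k B B' Hle Hk Hm n Hn. specialize (Hk Hm n Hn). lra. }
  { intros m _. destruct m as [|m].
    - exists 0. intros H. lia.
    - destruct (series_bounded _ (Hrow (S m) ltac:(lia))) as [B HB].
      exists B. intros _ n Hn. destruct n as [|n]; [lia|]. apply HB. }
  destruct (finite_max (fun n B => (1 <= n)%nat -> forall m, (1 <= m)%nat -> Cmod (c m n) <= B))
    with (K := (N0 + 2)%nat) as [B2 HB2].
  { intros k B B' Hle Hk Hm n Hn. specialize (Hk Hm n Hn). lra. }
  { intros n _. destruct n as [|n].
    - exists 0. intros H. lia.
    - destruct (series_bounded _ (Hcol (S n) ltac:(lia))) as [B HB].
      exists B. intros _ m Hm. destruct m as [|m]; [lia|]. apply HB. }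
  exists (Rabs B1 + Rabs B2 + Rabs (4 * K)). intros m n Hm Hn.
  assert (R1 := Rle_abs B1). assert (R2 := Rle_abs B2). assert (R3 := Rle_abs (4 * K)).
  assert (R4 := Rabs_pos B1). assert (R5 := Rabs_pos B2). assert (R6 := Rabs_pos (4*K)).
  destruct (le_lt_dec m (M0 + 2)) as [Hm2|Hm2].
  { specialize (HB1 m Hm2 Hm n Hn). lra. }
  destruct (le_lt_dec n (N0 + 2)) as [Hn2|Hn2].
  { specialize (HB2 n Hn2 Hn m Hm). lra. }
  destruct m as [|[|i]]; [lia|lia|]. destruct n as [|[|j]]; [lia|lia|].
  assert (E1 : forall J, dpartial c (S i, J) = (dpartial c (i, J) +
            sum_n (fun j' => c (S (S i)) (S j')) J)%C).
  { intros J. unfold dpartial. simpl. rewrite sum_Sn. reflexivity. }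
  assert (E3 : sum_n (fun j' => c (S (S i)) (S j')) (S j) =
               (sum_n (fun j' => c (S (S i)) (S j')) j + c (S (S i)) (S (S j)))%C).
  { rewrite sum_Sn. reflexivity. }
  assert (E : c (S (S i)) (S (S j)) = (dpartial c (S i, S j) - dpartial c (i, S j)
              - dpartial c (S i, j) + dpartial c (i, j))%C).
  { rewrite !E1, E3. ring. }
  rewrite E. eapply Rle_trans; [apply Cmod4|].
  assert (HK1 := HK (S i) (S j) ltac:(lia) ltac:(lia)).
  assert (HK2 := HK i (S j) ltac:(lia) ltac:(lia)).
  assert (HK3 := HK (S i) j ltac:(lia) ltac:(lia)).
  assert (HK4 := HK i j ltac:(lia) ltac:(lia)).
  lra.
Qed.

Lemma Cmod_npow (n : nat) (s : C) : Cmod (npow_neg n s) = exp (- Re s * ln (INR n)).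
Proof.
  unfold npow_neg. rewrite Cmod_mult, Cmod_R, Rabs_pos_eq by (left; apply exp_pos).
  unfold Cmod. simpl.
  replace (cos (Im s * ln (INR n)) * (cos (Im s * ln (INR n)) * 1) +
     - sin (Im s * ln (INR n)) * (- sin (Im s * ln (INR n)) * 1)) with 1.
  - rewrite sqrt_1. ring.
  - assert (H := sin2_cos2 (Im s * ln (INR n))). unfold Rsqr in H. nra.
Qed.

Lemma npow_1 (s : C) : npow_neg 1 s = RtoC 1.
Proof.
  unfold npow_neg. simpl INR. rewrite ln_1, !Rmult_0_r, exp_0, cos_0, sin_0.
  apply injective_projections; simpl; ring.
Qed.

Lemma dterm_11 a s w : dterm a s w 1 1 = a 1%nat 1%nat.
Proof. unfold dterm. rewrite !npow_1. ring. Qed.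

Lemma dterm_cmp a s w s0 w0 m n :
  Cmod (dterm a s w m n) = Cmod (dterm a s0 w0 m n) *
    exp (- (Re s - Re s0) * ln (INR m)) * exp (- (Re w - Re w0) * ln (INR n)).
Proof.
  unfold dterm. rewrite !Cmod_mult, !Cmod_npow.
  replace (- Re s * ln (INR m)) with (- Re s0 * ln (INR m) + - (Re s - Re s0) * ln (INR m)) by ring.
  replace (- Re w * ln (INR n)) with (- Re w0 * ln (INR n) + - (Re w - Re w0) * ln (INR n)) by ring.
  rewrite !exp_plus. ring.
Qed.

Lemma exp_m2ln (k : R) : 0 < k -> exp (- (2 * ln k)) = / (k * k).
Proof.
  intros Hk. rewrite exp_Ropp. replace (2 * ln k) with (ln k + ln k) by ring.
  rewrite exp_plus, exp_ln by exact Hk. reflexivity.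
Qed.

Lemma sum_e_bound (X z : R) (M : nat) : 0 <= z -> 2 + z <= X ->
  sum_n (fun i => exp (- X * ln (INR (S i)))) M <= 1 + exp (- z * ln 2) * (1 - / INR (S M)).
Proof.
  intros Hz HX. induction M as [|M IH].
  - rewrite sum_O. simpl INR. rewrite ln_1, Rmult_0_r, exp_0, Rinv_1. lra.
  - rewrite sum_Sn. change plus with Rplus.
    set (k := INR (S (S M))).
    assert (Hk : k = INR (S M) + 1) by (unfold k; rewrite S_INR; ring).
    assert (HM : 1 <= INR (S M)) by (rewrite S_INR; assert (H:=pos_INR M); lra).
    assert (Hk2 : 2 <= k) by lra.
    assert (Hl2 : 0 < ln 2) by (rewrite <- ln_1; apply ln_increasing; lra).
    assert (Hlk : ln 2 <= ln k) by (destruct (Req_dec k 2) as [->|]; [lra|left; apply ln_increasing; lra]).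
    assert (He : exp (- X * ln k) <= exp (- z * ln 2) * / (k * k)).
    { rewrite <- exp_m2ln by lra. rewrite <- exp_plus.
      destruct (Req_dec (- X * ln k) (- z * ln 2 + - (2 * ln k))) as [E|E].
      - rewrite E; lra.
      - left. apply exp_increasing. nra. }
    assert (Hd : 0 < exp (- z * ln 2)) by apply exp_pos.
    assert (Hinv : / (k * k) <= / INR (S M) - / k).
    { rewrite Hk. field_simplify; try lra.
      apply Rmult_le_compat_r with (r := 1) in HM; try lra.
      unfold Rdiv. apply Rmult_le_compat_l; [lra|].
      apply Rinv_le_contravar. nra. nra. }
    fold k. fold k in IH. nra.
Qed.

Lemma sum_nonneg (f : nat -> R) N : (forall i, 0 <= f i) -> 0 <= sum_n f N.
Proof.
  intros H. induction N as [|N IH].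
  - rewrite sum_O. apply H.
  - rewrite sum_Sn. change plus with Rplus. specialize (H (S N)). lra.
Qed.

Lemma sum_ind {G : AbelianMonoid} (x : G) N :
  sum_n (fun j => if Nat.eqb j 0 then x else zero) N = x.
Proof.
  induction N as [|N IH].
  - rewrite sum_O. reflexivity.
  - rewrite sum_Sn, IH. simpl. apply plus_zero_r.
Qed.

Lemma dsum_split {G : AbelianMonoid} (c : nat -> nat -> G) M N :
  sum_n (fun i => sum_n (fun j => c i j) N) M =
  plus (sum_n (fun i => sum_n (fun j => if andb (Nat.eqb i 0) (Nat.eqb j 0) then zero else c i j) N) M)
       (c 0%nat 0%nat).
Proof.
  transitivity (sum_n (fun i => sum_n (fun j => plus
     (if andb (Nat.eqb i 0) (Nat.eqb j 0) then zero else c i j)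
     (if Nat.eqb i 0 then (if Nat.eqb j 0 then c 0%nat 0%nat else zero) else zero)) N) M).
  { apply sum_n_ext. intros i. apply sum_n_ext. intros j.
    destruct i, j; simpl; rewrite ?plus_zero_r, ?plus_zero_l; reflexivity. }
  transitivity (sum_n (fun i => plus
     (sum_n (fun j => if andb (Nat.eqb i 0) (Nat.eqb j 0) then zero else c i j) N)
     (if Nat.eqb i 0 then c 0%nat 0%nat else zero)) M).
  { apply sum_n_ext. intros i. rewrite sum_n_plus. f_equal.
    destruct i; simpl.
    - apply sum_ind.
    - transitivity (sum_n (fun j => if Nat.eqb j 0 then @zero G else zero) N);
      [apply sum_n_ext; intros j; destruct j; reflexivity|apply sum_ind]. }
  rewrite sum_n_plus, sum_ind. reflexivity.
Qed.

Lemma dpartial_bound (c : nat -> nat -> C) (g : nat -> nat -> R) M N :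
  (forall i j, Cmod (c i j) <= g i j) ->
  Cmod (sum_n (fun i => sum_n (fun j => c i j) N) M - c 0%nat 0%nat) <=
  sum_n (fun i => sum_n (fun j => g i j) N) M - g 0%nat 0%nat.
Proof.
  intros Hg. rewrite (dsum_split c), (dsum_split g).
  change plus with Cplus at 1. change plus with Rplus.
  assert (HC : forall x y : C, (x + y - y = x)%C) by (intros; ring).
  assert (HR : forall x y : R, x + y - y = x) by (intros; ring).
  rewrite HC, HR.
  change (Cmod ?x) with (norm x). unfold sum_n.
  refine (Rle_trans _ _ _ (@norm_sum_n_m C_AbsRing C_NormedModule _ 0 M) _).
  apply sum_n_m_le. intros i.
  refine (Rle_trans _ _ _ (@norm_sum_n_m C_AbsRing C_NormedModule _ 0 N) _).
  apply sum_n_m_le. intros j.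
  destruct (andb _ _).
  - change (Cmod 0 <= 0). rewrite Cmod_0. apply Rle_refl.
  - apply Hg.
Qed.

Lemma phiA_re rho a b d s : d <> 0 -> Re (phiA rho a b d s) = a * (Re s - rho) / d + rho.
Proof. intros Hd. unfold phiA. unfold Re. simpl. field. exact Hd. Qed.

Lemma dvalue_spec c : (exists l, dsum_to c l) -> dsum_to c (dvalue c).
Proof. intros H. unfold dvalue. apply epsilon_spec. exact H. Qed.

Lemma kappa_bound (rho : R) (a : nat -> nat -> C) (B0 : R)
  (HB0 : forall m n, (1 <= m)%nat -> (1 <= n)%nat ->
          Cmod (dterm a (RtoC (rho + 1)) (RtoC (rho + 1)) m n) <= B0)
  (s w : C) (z : R) : 0 <= z -> rho + 3 + z <= Re s -> rho + 3 + z <= Re w ->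
  (exists l, dsum_to (dterm a s w) l) ->
  Cmod (dvalue (dterm a s w) - a 1%nat 1%nat) <=
     B0 * ((1 + exp (- z * ln 2)) * (1 + exp (- z * ln 2)) - 1).
Proof.
  intros Hz Hs Hw Hex.
  set (c := dterm a s w). set (L := dvalue c).
  assert (HL : dsum_to c L) by (apply dvalue_spec; exact Hex).
  set (delta := exp (- z * ln 2)).
  assert (Hdp : 0 < delta) by apply exp_pos.
  assert (HB0p : 0 <= B0).
  { eapply Rle_trans; [apply Cmod_ge_0|apply (HB0 1%nat 1%nat); lia]. }
  set (X := Re s - (rho + 1)). set (Y := Re w - (rho + 1)).
  set (eX := fun i : nat => exp (- X * ln (INR (S i)))).
  set (eY := fun i : nat => exp (- Y * ln (INR (S i)))).
  assert (Hbound : forall M N, Cmod (dpartial c (M, N) - a 1%nat 1%nat) <=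
     B0 * ((1 + delta) * (1 + delta) - 1)).
  { intros M N. unfold dpartial. simpl fst; simpl snd.
    rewrite <- (dterm_11 a s w). fold c.
    eapply Rle_trans.
    { apply (dpartial_bound (fun i j => c (S i) (S j)) (fun i j => B0 * eX i * eY j)).
      intros i j. unfold c. rewrite (dterm_cmp a s w (RtoC (rho + 1)) (RtoC (rho + 1))).
      simpl (Re (RtoC (rho + 1))). fold X Y. unfold eX, eY.
      apply Rmult_le_compat_r; [left; apply exp_pos|].
      apply Rmult_le_compat_r; [left; apply exp_pos|].
      apply HB0; lia. }
    assert (Hin : forall i, sum_n (fun j => B0 * eX i * eY j) N = (B0 * eX i) * sum_n eY N).
    { intros i. exact (sum_n_mult_l (K := R_Ring) (B0 * eX i) eY N). }
    rewrite (sum_n_ext _ _ M Hin).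
    assert (H2 : sum_n (fun i => B0 * eX i * sum_n eY N) M = B0 * sum_n eX M * sum_n eY N).
    { transitivity (sum_n (fun i => B0 * eX i) M * sum_n eY N).
      - exact (sum_n_mult_r (K := R_Ring) (sum_n eY N) (fun i => B0 * eX i) M).
      - f_equal. exact (sum_n_mult_l (K := R_Ring) B0 eX M). }
    rewrite H2.
    assert (E1 : eX 0%nat = 1) by (unfold eX; simpl INR; rewrite ln_1, Rmult_0_r, exp_0; reflexivity).
    assert (E2 : eY 0%nat = 1) by (unfold eY; simpl INR; rewrite ln_1, Rmult_0_r, exp_0; reflexivity).
    rewrite E1, E2.
    assert (PX1 := sum_e_bound X z M Hz ltac:(unfold X; lra)).
    assert (PY1 := sum_e_bound Y z N Hz ltac:(unfold Y; lra)).
    fold delta in PX1, PY1. fold eX in PX1. fold eY in PY1.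
    assert (PX0 : 0 <= sum_n eX M) by (apply sum_nonneg; intros; left; apply exp_pos).
    assert (PY0 : 0 <= sum_n eY N) by (apply sum_nonneg; intros; left; apply exp_pos).
    assert (I1 : 0 < / INR (S M)) by (apply Rinv_0_lt_compat, lt_0_INR; lia).
    assert (I2 : 0 < / INR (S N)) by (apply Rinv_0_lt_compat, lt_0_INR; lia).
    assert (PX2 : sum_n eX M <= 1 + delta) by nra.
    assert (PY2 : sum_n eY N <= 1 + delta) by nra.
    assert (PP : sum_n eX M * sum_n eY N <= (1 + delta) * (1 + delta))
      by (apply Rmult_le_compat; lra).
    assert (PP2 := Rmult_le_compat_l _ _ _ HB0p PP). nra. }
  apply le_epsilon. intros eps Heps.
  assert (Hnf := @norm_factor_gt_0 C_AbsRing C_NormedModule).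
  unfold dsum_to in HL. rewrite filterlim_locally in HL.
  assert (Hep : 0 < eps / @norm_factor _ C_NormedModule) by (apply Rdiv_lt_0_compat; lra).
  destruct (HL (mkposreal _ Hep)) as [Q R' [M0 HQ] [N0 HR] HP].
  assert (Hb := norm_compat2 _ _ _ (HP M0 N0 (HQ M0 (le_n _)) (HR N0 (le_n _)))).
  change (norm (minus (dpartial c (M0, N0)) L)) with (Cmod (dpartial c (M0, N0) - L)%C) in Hb.
  simpl pos in Hb.
  replace (@norm_factor _ C_NormedModule * (eps / @norm_factor _ C_NormedModule)) with eps in Hb
    by (field; lra).
  assert (E : (L - a 1%nat 1%nat = - (dpartial c (M0, N0) - L) + (dpartial c (M0, N0) - a 1%nat 1%nat))%C)
    by ring.
  rewrite E. eapply Rle_trans; [apply Cmod_triangle|]. rewrite Cmod_opp.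
  specialize (Hbound M0 N0). fold delta. lra.
Qed.

Theorem corollary4p6 (rho : R) (a : nat -> nat -> C) :
  is_dirichlet_kernel rho a ->
  nonconstant_on rho (kappa a) ->
  ~ autL_invariant rho (kappa a).
Proof.
  intros Hk [s [u [s' [u' [Hs [Hu [Hs' [Hu' Hne]]]]]]]] Hinv.
  assert (H0 : inH rho (RtoC (rho + 1))) by (unfold inH; simpl; lra).
  assert (Hc0 := Hk _ _ H0 H0). rewrite Cconj_conj in Hc0.
  destruct (dbounded _ Hc0) as [B0 HB0].
  assert (HB0p : 0 <= B0).
  { eapply Rle_trans; [apply Cmod_ge_0|apply (HB0 1%nat 1%nat); lia]. }
  assert (Hconst : forall s u, inH rho s -> inH rho u -> kappa a s u = a 1%nat 1%nat).
  { intros x y Hx Hy. unfold inH in Hx, Hy.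
    assert (Hd : forall delta, 0 < delta <= 1 ->
              Cmod (kappa a x y - a 1%nat 1%nat) <= 3 * B0 * delta).
    { intros delta [Hd1 Hd2].
      assert (Hl2 : 0 < ln 2) by (rewrite <- ln_1; apply ln_increasing; lra).
      set (z := - ln delta / ln 2).
      assert (Hz : 0 <= z).
      { unfold z. unfold Rdiv. apply Rmult_le_pos; [|left; apply Rinv_0_lt_compat; lra].
        assert (ln delta <= 0).
        { destruct (Req_dec delta 1) as [->|]; [rewrite ln_1; lra|].
          left. rewrite <- ln_1. apply ln_increasing; lra. }
        lra. }
      assert (Hdz : exp (- z * ln 2) = delta).
      { unfold z. replace (- (- ln delta / ln 2) * ln 2) with (ln delta) by (field; lra).
        apply exp_ln. lra. }
      set (T := (3 + z) / (Re x - rho) + (3 + z) / (Re y - rho) + 1).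
      assert (HT1 : 0 < (3 + z) / (Re x - rho)) by (apply Rdiv_lt_0_compat; lra).
      assert (HT2 : 0 < (3 + z) / (Re y - rho)) by (apply Rdiv_lt_0_compat; lra).
      assert (HT : 0 < T) by (unfold T; lra).
      set (t := sqrt T).
      assert (Ht : 0 < t) by (apply sqrt_lt_R0; exact HT).
      assert (Htt : t * t = T) by (apply sqrt_sqrt; lra).
      assert (Hit : / t <> 0) by (apply Rinv_neq_0_compat; lra).
      assert (Had : t * / t = 1) by (field; lra).
      assert (Hre : forall v, Re (phiA rho t 0 (/ t) v) = T * (Re v - rho) + rho).
      { intros v. rewrite phiA_re by exact Hit. rewrite <- Htt. field. lra. }
      assert (Hx2 : rho + 3 + z <= Re (phiA rho t 0 (/ t) x)).
      { rewrite Hre. assert ((3 + z) / (Re x - rho) * (Re x - rho) = 3 + z) by (field; lra).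
        assert (T * (Re x - rho) >= (3 + z) / (Re x - rho) * (Re x - rho)).
        { apply Rle_ge, Rmult_le_compat_r; [lra|]. unfold T. lra. }
        lra. }
      assert (Hy2 : rho + 3 + z <= Re (phiA rho t 0 (/ t) y)).
      { rewrite Hre. assert ((3 + z) / (Re y - rho) * (Re y - rho) = 3 + z) by (field; lra).
        assert (T * (Re y - rho) >= (3 + z) / (Re y - rho) * (Re y - rho)).
        { apply Rle_ge, Rmult_le_compat_r; [lra|]. unfold T. lra. }
        lra. }
      rewrite <- (Hinv t 0 (/ t) Had x y Hx Hy).
      unfold kappa.
      eapply Rle_trans.
      { apply (kappa_bound rho a B0 HB0 _ _ z Hz Hx2).
        - rewrite re_conj. exact Hy2.
        - assert (Hc := Hk (phiA rho t 0 (/ t) x) (Cconj (phiA rho t 0 (/ t) y))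
                     ltac:(unfold inH; lra) ltac:(unfold inH; rewrite re_conj; lra)).
          rewrite Cconj_conj in Hc. exact (proj1 Hc). }
      rewrite Hdz.
      assert (Hq : delta * delta <= delta) by nra.
      assert (Hq2 := Rmult_le_compat_l _ _ _ HB0p Hq).
      replace ((1 + delta) * (1 + delta) - 1) with (2 * delta + delta * delta) by ring.
      nra. }
    destruct (Req_dec (Cmod (kappa a x y - a 1%nat 1%nat)) 0) as [E|E].
    - apply Cmod_eq_0 in E. 
      replace (kappa a x y) with ((kappa a x y - a 1%nat 1%nat) + a 1%nat 1%nat)%C by ring.
      rewrite E. ring.
    - exfalso. set (e := Cmod (kappa a x y - a 1%nat 1%nat)) in *.
      assert (He : 0 < e) by (assert (0 <= e) by apply Cmod_ge_0; lra).
      assert (Hq : 0 < e / (3 * B0 + 1)) by (apply Rdiv_lt_0_compat; lra).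
      set (dl := Rmin 1 (e / (3 * B0 + 1))).
      assert (Hdl1 : 0 < dl) by (unfold dl; apply Rmin_glb_lt; lra).
      assert (Hdl2 : dl <= 1) by apply Rmin_l.
      assert (Hdl3 : dl <= e / (3 * B0 + 1)) by apply Rmin_r.
      specialize (Hd dl (conj Hdl1 Hdl2)).
      assert (Hm : (3 * B0 + 1) * dl <= e).
      { apply Rmult_le_compat_l with (r := 3 * B0 + 1) in Hdl3; [|lra].
        replace ((3 * B0 + 1) * (e / (3 * B0 + 1))) with e in Hdl3 by (field; lra). lra. }
      fold e in Hd. nra. }
  apply Hne. rewrite !Hconst; auto.
Qed.
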